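(* Let $D$ be an oriented graph whose missing graph is a vertex-disjoint union of paths. Then every vertex of the dependency digraph $\Delta(D)$ has out-degree at most 2 and in-degree at most 2.
   Context: All digraphs are finite oriented graphs. $N^+(v)$ is the out-neighborhood; $N^{++}(v)$ is the set of vertices $w\notin N^+(v)\cup\{v\}$ with $u\to w$ for some $u\in N^+(v)$. A missing edge is a pair of distinct non-adjacent vertices; the missing graph is formed by the missing edges. For missing edges $\{x,y\},\{a,b\}$, $\{x,y\}$ loses to $\{a,b\}$ if the endpoints can be labelled so that $x\to a$, $b\notin N^+(x)\cup N^{++}(x)$, $y\to b$, $a\notin N^+(y)\cup N^{++}(y)$. The dependency digraph $\Delta(D)$ has the missing edges as vertices and an arc $(e,e')$ whenever $e$ loses to $e'$. *)

(* Defs.v *)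
From mathcomp Require Import all_boot.
Set Implicit Arguments. Unset Strict Implicit. Unset Printing Implicit Defensive.

Section Digraphs.
Variable T : finType.
Variable arc : rel T.

Definition oriented : Prop :=
  (forall x, ~~ arc x x) /\ (forall x y, arc x y -> ~~ arc y x).

Definition outN (v : T) : {set T} := [set w | arc v w].

Definition secN (v : T) : {set T} :=
  [set w | (w \notin outN v) && (w != v) && [exists u, arc v u && arc u w]].

Definition missing (x y : T) : bool := [&& x != y, ~~ arc x y & ~~ arc y x].

Definition missing_edge (e : {set T}) : bool :=
  [exists x, exists y, missing x y && (e == [set x; y])].

Definition missing_union_of_paths : Prop :=
  (forall v, #|[set w | missing v w]| <= 2) /\
  (forall c : seq T, 3 <= size c -> uniq c -> ~~ cycle missing c).

Definition loses (e e' : {set T}) : bool :=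
  [exists x, exists y, exists a, exists b,
     [&& e == [set x; y], e' == [set a; b],
         arc x a, b \notin outN x :|: secN x,
         arc y b & a \notin outN y :|: secN y]].

Definition dep_outdeg (e : {set T}) : nat :=
  #|[set e' | missing_edge e' && loses e e']|.
Definition dep_indeg (e : {set T}) : nat :=
  #|[set e' | missing_edge e' && loses e' e]|.

End Digraphs.

(* Main.v *)
Require Import Defs.
From mathcomp Require Import all_boot.
From mathcomp Require Import zify.
Set Implicit Arguments. Unset Strict Implicit. Unset Printing Implicit Defensive.

Lemma missingC (T : finType) (arc : rel T) x y : missing arc x y = missing arc y x.
Proof. by rewrite /missing eq_sym; case: (arc x y); case: (arc y x). Qed.

Lemma bound (T : finType) (arc : rel T) (P : rel T) :
  missing_union_of_paths arc ->
  (forall a b c d, P a b -> P c d -> missing arc a d) ->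
  #|[set e : {set T} | [exists a, exists b, P a b && (e == [set a; b])]]| <= 2.
Proof.
move=> [Hdeg Hcyc] HP.
set A := [set a | [exists b, P a b]].
set B := [set b | [exists a, P a b]].
have HAB : forall a b, a \in A -> b \in B -> missing arc a b.
  move=> a b; rewrite !inE => /existsP [b' Hab'] /existsP [a' Ha'b].
  exact: (HP _ _ _ _ Hab' Ha'b).
have H1 : #|[set e : {set T} | [exists a, exists b, P a b && (e == [set a; b])]]|
          <= #|setX A B|.
  apply: (leq_trans _ (leq_imset_card (fun p : T * T => [set p.1; p.2]) (setX A B))).
  apply: subset_leq_card; apply/subsetP => e; rewrite inE.
  move=> /existsP [a /existsP [b /andP [Pab /eqP ->]]].
  apply/imsetP; exists (a, b) => //.
  rewrite !inE /=; apply/andP; split; apply/existsP; [exists b | exists a]; done.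
apply: (leq_trans H1); rewrite cardsX.
have HA1 : #|A| <= 1 \/ #|B| <= 1.
  case: (leqP #|A| 1) => hA; first by left.
  case: (leqP #|B| 1) => hB; first by right.
  exfalso.
  move/card_gt1P: hA => [a1 [a2 [ha1 ha2 ha12]]].
  move/card_gt1P: hB => [b1 [b2 [hb1 hb2 hb12]]].
  have m11 := HAB _ _ ha1 hb1. have m12 := HAB _ _ ha1 hb2.
  have m21 := HAB _ _ ha2 hb1. have m22 := HAB _ _ ha2 hb2.
  have ne : forall a b, missing arc a b -> a != b by move=> a b /and3P [].
  have U : uniq [:: a1; b1; a2; b2].
    rewrite /= !inE !negb_or (ne _ _ m11) (ne _ _ m22) (ne _ _ m12) ha12 hb12.
    by rewrite eq_sym (ne _ _ m21).
  apply/negP: (Hcyc [:: a1; b1; a2; b2] isT U).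
  by rewrite /= m11 m22 -(missingC arc a2 b1) m21 -(missingC arc a1 b2) m12.
case: HA1 => h.
  case: (posnP #|A|) => [-> //|hA].
  move/card_gt0P: hA => [a ha].
  have : #|B| <= 2.
    apply: (leq_trans _ (Hdeg a)); apply: subset_leq_card; apply/subsetP => b hb.
    by rewrite inE HAB.
  nia.
case: (posnP #|B|) => [->|hB]; first by rewrite muln0.
move/card_gt0P: hB => [b hb].
have : #|A| <= 2.
  apply: (leq_trans _ (Hdeg b)); apply: subset_leq_card; apply/subsetP => a ha.
  by rewrite inE missingC HAB.
nia.
Qed.

Lemma set2_cases (T : finType) (x0 y0 x y : T) :
  x0 != y0 -> [set x0; y0] = [set x; y] ->
  (x = x0 /\ y = y0) \/ (x = y0 /\ y = x0).
Proof.
move=> ne E.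
have hx : x \in [set x0; y0] by rewrite E !inE eqxx.
have hy : y \in [set x0; y0] by rewrite E !inE eqxx orbT.
have hx0 : x0 \in [set x; y] by rewrite -E !inE eqxx.
have hy0 : y0 \in [set x; y] by rewrite -E !inE eqxx orbT.
move: hx hy; rewrite !inE => /orP [] /eqP hx /orP [] /eqP hy.
- move: hy0; rewrite hx hy !inE orbb => /eqP h.
  by move: ne; rewrite h eqxx.
- by left.
- by right.
- move: hx0; rewrite hx hy !inE orbb => /eqP h.
  by move: ne; rewrite h eqxx.
Qed.

Theorem proposition4p4 (T : finType) (arc : rel T) :
  oriented arc -> missing_union_of_paths arc ->
  forall e : {set T}, missing_edge arc e ->
    dep_outdeg arc e <= 2 /\ dep_indeg arc e <= 2.
Proof.
move=> _ Hm e /existsP [x0 /existsP [y0 /andP [m0 /eqP Ee]]].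
have m0' := m0.
move: m0' => /and3P [ne0 nxy nyx].
split.
- pose P := fun a b => [&& arc x0 a, b \notin outN arc x0 :|: secN arc x0,
                         arc y0 b & a \notin outN arc y0 :|: secN arc y0].
  apply: leq_trans (bound (P := P) Hm _).
    apply: subset_leq_card; apply/subsetP => e'; rewrite !inE.
    move=> /andP [_ /existsP [x /existsP [y /existsP [a /existsP [b]]]]].
    move=> /and5P [/eqP E1 /eqP E2 H1 H2 /andP [H3 H4]].
    rewrite Ee in E1.
    case: (set2_cases ne0 E1) => [[Ex Ey] | [Ex Ey]]; subst x y.
      apply/existsP; exists a; apply/existsP; exists b; rewrite E2 eqxx andbT.
      by rewrite /P H1 H2 H3 H4.
    apply/existsP; exists b; apply/existsP; exists a; rewrite E2 setUC eqxx andbT.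
    by rewrite /P H1 H2 H3 H4.
  move=> a b c d /and4P [xa _ _ ha] /and4P [_ hd yd _].
  move: ha hd; rewrite !inE !negb_or => /andP [nya nay] /andP [nxd ndx].
  rewrite /missing.
  have -> : a != d by apply/eqP => ad; move: nxd; rewrite -ad xa.
  have dx : d != x0 by apply/eqP => dx; move: nyx; rewrite -dx yd.
  have ay : a != y0 by apply/eqP => ay; move: nxy; rewrite -ay xa.
  rewrite /=; apply/andP; split.
    apply/negP => ad; move/negP: ndx; apply; rewrite nxd dx /=.
    by apply/existsP; exists a; rewrite xa ad.
  apply/negP => da; move/negP: nay; apply; rewrite nya ay /=.
  by apply/existsP; exists d; rewrite yd da.
- pose P := fun a b => [&& arc a x0, y0 \notin outN arc a :|: secN arc a,
                         arc b y0 & x0 \notin outN arc b :|: secN arc b].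
  apply: leq_trans (bound (P := P) Hm _).
    apply: subset_leq_card; apply/subsetP => e'; rewrite !inE.
    move=> /andP [_ /existsP [x /existsP [y /existsP [a /existsP [b]]]]].
    move=> /and5P [/eqP E1 /eqP E2 H1 H2 /andP [H3 H4]].
    rewrite Ee in E2.
    case: (set2_cases ne0 E2) => [[Ea Eb] | [Ea Eb]]; subst a b.
      apply/existsP; exists x; apply/existsP; exists y; rewrite E1 eqxx andbT.
      by rewrite /P H1 H2 H3 H4.
    apply/existsP; exists y; apply/existsP; exists x; rewrite E1 setUC eqxx andbT.
    by rewrite /P H1 H2 H3 H4.
  move=> a b c d /and4P [ax ha _ _] /and4P [_ _ dy hd].
  move: ha hd; rewrite !inE !negb_or => /andP [nay nya] /andP [ndx nxd].
  rewrite /missing.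
  have -> : a != d by apply/eqP => ad; move: ndx; rewrite -ad ax.
  have ya : y0 != a by apply/eqP => ya; move: nyx; rewrite ya ax.
  have xd : x0 != d by apply/eqP => xd; move: nxy; rewrite xd dy.
  rewrite /=; apply/andP; split.
    apply/negP => ad; move/negP: nya; apply; rewrite nay ya /=.
    by apply/existsP; exists d; rewrite ad dy.
  apply/negP => da; move/negP: nxd; apply; rewrite ndx xd /=.
  by apply/existsP; exists a; rewrite da ax.
Qed.
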